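(* Let $f\colon\Sigma\to\mathbb{R}^3$ be a frontal and $p\in\Sigma$ a non-degenerate singular point. Let $\gamma=\gamma(t)$ be a singular curve with $\gamma(0)=p$, and let $\xi,\eta$ be smooth vector fields near $p$ such that along $\gamma$ one has $\xi=\gamma'$, $df(\eta)=0$ and $\det(\xi,\eta)>0$. Assume that (a) $\eta^3f(p)=\mathbf{0}$; (b) $\xi f(p)$ and $\eta^2f(p)$ are linearly independent; (c) $\xi\eta^3f(p)$ and $\eta^2f(p)$ are linearly dependent. Then there exist a regular curve $c\colon(-\varepsilon,\varepsilon)\to\Sigma$ and $\ell\in\mathbb{R}$ such that, writing $\hat c=f\circ c$: $c(0)=p$, $c'(0)$ is parallel to $\eta(p)$, $\hat c''(0)\neq\mathbf 0$, $\hat c'''(0)=\ell\,\hat c''(0)$, and \[ B:=\det\big(df(\gamma'(0)),\,\hat c''(0),\,3\hat c^{(5)}(0)-10\ell\,\hat c^{(4)}(0)\big)=3\det\big(\xi f,\eta^2f,\eta^5f\big)(p). \]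
   Context: A smooth map $f\colon U\to\mathbb{R}^3$ from a surface is a frontal if there is a smooth map $n\colon U\to S^2$ with $n$ orthogonal (for the Euclidean inner product) to $df(TU)$. A singular point is a point where $f$ is not an immersion. The signed area density is $\lambda=\det(f_u,f_v,n)$ in local coordinates $(u,v)$; a singular point $p$ is non-degenerate if $d\lambda_p\neq0$. Near a non-degenerate singular point the singular set is the image of a regular curve $\gamma$ (a singular curve). For a vector field $\eta$, $\eta^kf$ denotes the $k$-fold directional derivative $\eta\cdots\eta f$, and $\xi\eta^3f=\xi(\eta^3 f)$. *)

(* Defs.v *)
From HB Require Import structures.
From mathcomp Require Import all_boot all_order all_algebra.
From mathcomp Require Import all_classical all_reals all_analysis.
Set Implicit Arguments. Unset Strict Implicit. Unset Printing Implicit Defensive.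
Import Order.TTheory GRing.Theory Num.Theory.
Import numFieldNormedType.Exports.
Local Open Scope classical_set_scope.
Local Open Scope ring_scope.

Fixpoint Ck {R : realType} {V W : normedModType R} (k : nat)
  (U : set V) (F : V -> W) : Prop :=
  match k with
  | 0 => forall x, U x -> {for x, continuous F}
  | k'.+1 => (forall x, U x -> differentiable F x) /\
             (forall v : V, Ck k' U (fun x => derive F x v))
  end.

Definition smooth_on {R : realType} {V W : normedModType R}
  (U : set V) (F : V -> W) : Prop := forall k, Ck k U F.

Definition vfder {R : realType} {W : normedModType R}
  (X : 'rV[R]_2 -> 'rV[R]_2) (F : 'rV[R]_2 -> W) : 'rV[R]_2 -> W :=
  fun x => derive F x (X x).

Definition vfiter {R : realType} {W : normedModType R} (k : nat)
  (X : 'rV[R]_2 -> 'rV[R]_2) (F : 'rV[R]_2 -> W) : 'rV[R]_2 -> W :=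
  iter k (vfder X) F.

Definition e2 {R : realType} (i : 'I_2) : 'rV[R]_2 := delta_mx 0 i.
Definition pd {R : realType} {W : normedModType R} (i : 'I_2)
  (F : 'rV[R]_2 -> W) : 'rV[R]_2 -> W := fun x => derive F x (e2 i).

Definition dot3 {R : realType} (a b : 'rV[R]_3) : R := \sum_(i < 3) a 0 i * b 0 i.

Definition det3 {R : realType} (a b c : 'rV[R]_3) : R :=
  \det (\matrix_(i < 3, j < 3)
          (if i == 0 :> nat then a 0 j else if i == 1 :> nat then b 0 j else c 0 j)).
Definition det2 {R : realType} (a b : 'rV[R]_2) : R :=
  \det (\matrix_(i < 2, j < 2) (if i == 0 :> nat then a 0 j else b 0 j)).

Definition lin_indep2 {R : realType} (a b : 'rV[R]_3) : Prop :=
  forall s t : R, s *: a + t *: b = 0 -> s = 0 /\ t = 0.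

Definition frontal_with {R : realType} (U : set 'rV[R]_2)
  (f n : 'rV[R]_2 -> 'rV[R]_3) : Prop :=
  [/\ smooth_on U f, smooth_on U n,
      (forall x, U x -> dot3 (n x) (n x) = 1) &
      (forall x, U x -> dot3 (pd 0 f x) (n x) = 0 /\ dot3 (pd 1 f x) (n x) = 0)].

Definition immersion_at {R : realType} (f : 'rV[R]_2 -> 'rV[R]_3) (x : 'rV[R]_2) : Prop :=
  forall v : 'rV[R]_2, derive f x v = 0 -> v = 0.

Definition singular_point {R : realType} (f : 'rV[R]_2 -> 'rV[R]_3) (x : 'rV[R]_2) : Prop :=
  ~ immersion_at f x.

Definition lambda {R : realType} (f n : 'rV[R]_2 -> 'rV[R]_3) : 'rV[R]_2 -> R :=
  fun x => det3 (pd 0 f x) (pd 1 f x) (n x).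

Definition nondegenerate_singular_point {R : realType}
  (f n : 'rV[R]_2 -> 'rV[R]_3) (p : 'rV[R]_2) : Prop :=
  singular_point f p /\ (pd 0 (lambda f n) p <> 0 \/ pd 1 (lambda f n) p <> 0).

Definition sym_int {R : realType} (e : R) : set R := [set t | - e < t < e].

Definition regular_curve {R : realType} (e : R) (U : set 'rV[R]_2)
  (c : R -> 'rV[R]_2) : Prop :=
  [/\ 0 < e, smooth_on (sym_int e) c,
      (forall t, sym_int e t -> U (c t)) &
      (forall t, sym_int e t -> derive1 c t <> 0)].

(* Main.v *)
Require Import Defs.
From HB Require Import structures.
From mathcomp Require Import all_boot all_order all_algebra.
From mathcomp Require Import all_classical all_reals all_analysis.
Import Order.TTheory GRing.Theory Num.Theory.
Import numFieldNormedType.Exports.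
Local Open Scope classical_set_scope.
Local Open Scope ring_scope.

From mathcomp Require Import ring lra.
Set Implicit Arguments. Unset Strict Implicit. Unset Printing Implicit Defensive.
Section S.
Context {R : realType} {V W : normedModType R}.

Lemma near_eq_differentiable (f g : V -> W) x :
  (\near x, f x = g x) -> differentiable f x -> differentiable g x.
Proof.
move=> fg df.
have fxgx : f x = g x := nbhs_singleton fg.
have [dc dl] := (diff_locallyP _ _).1 df.
have dl' : g \o shift x = cst (g x) + 'd f x +o_ 0 id.
  apply/eqaddoP => e e0; move/eqaddoP: dl => /(_ e e0).
  have : \forall z \near 0, f (z + x) = g (z + x).
    by move: fg; rewrite (near_shift 0 x) /= subr0.
  apply: filter_app2; near=> z => /= fgz.
  suff -> : (g \o +%R^~ x - (cst (g x) + 'd f x)) z = (f \o +%R^~ x - (cst (f x) + 'd f x)) z by [].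
  by rewrite !fctE /= fgz fxgx.
have dg : 'd g x = 'd f x :> (V -> W) by apply: diff_unique.
by apply/diff_locallyP; rewrite dg.
Unshelve. all: by end_near. Qed.

Definition scl (a : R) (w : W) : W := a *: w.
Lemma scl_is_bilinear :
  bilinear_for
    (GRing.Scale.Law.clone _ _ *:%R _) (GRing.Scale.Law.clone _ _ *:%R _) scl.
Proof.
split=> [u'|u] a x y /=; rewrite /scl.
- by rewrite scalerDl scalerA.
- by rewrite scalerDr !scalerA mulrC.
Qed.
HB.instance Definition _ := bilinear_isBilinear.Build R R W W _ _ scl
  scl_is_bilinear.

Lemma differentiable_scalef (phi : V -> R) (F : V -> W) x :
  differentiable phi x -> differentiable F x ->
  differentiable (fun y => phi y *: F y) x.
Proof.
move=> dp dF.
have -> : (fun y => phi y *: F y) = (fun q => scl q.1 q.2) \o (fun y => (phi y, F y)) by [].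
apply: differentiable_comp; first exact: differentiable_pair.
apply: differentiable_bilin => q; exact: (@scale_continuous _ _ q).
Qed.

Lemma diff_scalef (phi : V -> R) (F : V -> W) x :
  differentiable phi x -> differentiable F x ->
  'd (fun y => phi y *: F y) x = (fun v => 'd phi x v *: F x + phi x *: 'd F x v) :> (V -> W).
Proof.
move=> dp dF.
have -> : (fun y => phi y *: F y) = (fun q => scl q.1 q.2) \o (fun y => (phi y, F y)) by [].
rewrite diff_comp; last 2 first.
  exact: differentiable_pair.
  apply: differentiable_bilin => q; exact: (@scale_continuous _ _ q).
rewrite diff_bilin; last by move=> q; exact: (@scale_continuous _ _ q).
rewrite diff_pair //; apply/funext => v /=; rewrite /scl addrC.
done.
Qed.

Lemma derive_scalef (phi : V -> R) (F : V -> W) x v :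
  differentiable phi x -> differentiable F x ->
  derive (fun y => phi y *: F y) x v = derive phi x v *: F x + phi x *: derive F x v.
Proof.
move=> dp dF; rewrite deriveE; last exact: differentiable_scalef.
by rewrite diff_scalef // !deriveE.
Qed.


End S.

Section CkS.
Context {R : realType} {V : normedModType R}.

Lemma open_near (U : set V) x : open U -> U x -> \forall y \near x, U y.
Proof. by move=> oU Ux; apply: open_nbhs_nbhs. Qed.

Lemma Ck_sub k {W : normedModType R} (U U' : set V) (F : V -> W) : U' `<=` U -> Ck k U F -> Ck k U' F.
Proof.
elim: k F => [|k IH] F sU /=; first by move=> cF x /sU; apply: cF.
by move=> [dF hF]; split; [move=> x /sU; apply: dF| move=> v; apply: IH].
Qed.

Lemma Ck_ext k {W : normedModType R} (U : set V) (F G : V -> W) : open U ->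
  (forall x, U x -> F x = G x) -> Ck k U F -> Ck k U G.
Proof.
move=> oU; elim: k F G => [|k IH] F G FG /=.
- move=> cF x Ux.
  have nFG : \forall y \near x, F y = G y.
    by near=> y; apply: FG; near: y; exact: open_near.
  rewrite /prop_for /continuous_at -(FG x Ux); apply: cvg_trans (cF x Ux).
  by apply: near_eq_cvg; near=> y; rewrite (near nFG y).
- move=> [dF hF]; split.
  + move=> x Ux; apply: near_eq_differentiable (dF x Ux).
    by near=> y; apply: FG; near: y; exact: open_near.
  + move=> v; apply: (IH (fun x => derive F x v)) (hF v) => x Ux.
    by apply: near_eq_derive; near=> y; apply: FG; near: y; exact: open_near.
Unshelve. all: by end_near. Qed.

Lemma Ck_cont k {W : normedModType R} (U : set V) (F : V -> W) x : Ck k U F -> U x -> {for x, continuous F}.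
Proof.
case: k => [|k] /=; first by move=> cF; apply: cF.
by move=> [dF _] Ux; exact: differentiable_continuous (dF x Ux).
Qed.

Lemma Ck_diff k {W : normedModType R} (U : set V) (F : V -> W) x : Ck k.+1 U F -> U x -> differentiable F x.
Proof. by case=> dF _; apply: dF. Qed.

Lemma Ck_der k {W : normedModType R} (U : set V) (F : V -> W) v : Ck k.+1 U F -> Ck k U (fun x => derive F x v).
Proof. by case=> _; apply. Qed.

Lemma Ck_pred k {W : normedModType R} (U : set V) (F : V -> W) : Ck k.+1 U F -> Ck k U F.
Proof.
elim: k F => [|k IH] F /=.
  by move=> [dF _] x Ux; exact: differentiable_continuous (dF x Ux).
by move=> [dF hF]; split => // v; apply: IH; apply: hF.
Qed.

Lemma Ck_add k {W : normedModType R} (U : set V) (F G : V -> W) : open U ->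
  Ck k U F -> Ck k U G -> Ck k U (fun x => F x + G x).
Proof.
move=> oU; elim: k F G => [|k IH] F G /=.
  by move=> cF cG x Ux; apply: cvgD; [apply: cF | apply: cG].
move=> [dF hF] [dG hG]; split.
  by move=> x Ux; exact: differentiableD (dF x Ux) (dG x Ux).
move=> v; apply: (Ck_ext oU _ (IH _ _ (hF v) (hG v))) => x Ux /=.
rewrite (deriveD (f := F) (g := G)) //; apply: diff_derivable; [exact: dF | exact: dG].
Qed.

Lemma Ck_cst k {W : normedModType R} (U : set V) (a : W) : Ck k U (fun _ => a).
Proof.
elim: k a => [|k IH] a /=; first by move=> x _; exact: cvg_cst.
split; first by move=> x _; exact: differentiable_cst.
move=> v; rewrite (_ : (fun x => derive (fun=> a) x v) = fun=> 0) //.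
by apply/funext => x; exact: (derive_cst a).
Qed.

Lemma Ck_scale k {W : normedModType R} (U : set V) (phi : V -> R) (F : V -> W) : open U ->
  Ck k U phi -> Ck k U F -> Ck k U (fun x => phi x *: F x).
Proof.
move=> oU; elim: k phi F => [|k IH] phi F.
  by move=> cp cF x Ux; exact: continuousZ (cp x Ux) (cF x Ux).
move=> Cp CF; have Cp' := Ck_pred Cp; have CF' := Ck_pred CF.
case: Cp => dp hp; case: CF => dF hF; split.
  by move=> x Ux; exact: differentiable_scalef (dp x Ux) (dF x Ux).
move=> v; apply: (Ck_ext oU _ (Ck_add oU (IH _ _ (hp v) CF') (IH _ _ Cp' (hF v)))).
by move=> x Ux /=; rewrite derive_scalef //; [apply: dp | apply: dF].
Qed.


Lemma Ck_coord k (U : set V) m n (F : V -> 'M[R]_(m, n)) i j :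
  open U -> Ck k U F -> Ck k U (fun x => F x i j).
Proof.
move=> oU; elim: k F => [|k IH] F /=.
  move=> cF x Ux.
  exact: (continuous_comp (cF x Ux) (differentiable_continuous (differentiable_coord (F x) i j))).
move=> [dF hF]; split.
  move=> x Ux; exact: (differentiable_comp (dF x Ux) (differentiable_coord (F x) i j)).
move=> v; apply: (Ck_ext oU _ (IH _ (hF v))) => x Ux /=.
by rewrite derive_mx ?mxE //; apply: diff_derivable; apply: dF.
Qed.

Lemma Ck_minus k {W : normedModType R} (U : set V) (F G : V -> W) : open U ->
  Ck k U F -> Ck k U G -> Ck k U (fun x => F x - G x).
Proof.
move=> oU CF CG.
apply: (Ck_ext oU _ (Ck_add oU CF (Ck_scale oU (Ck_cst k U (-1 : R)) CG))).
by move=> x _ /=; rewrite scaleN1r.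
Qed.

End CkS.

Section CkS2.
Context {R : realType}.

Lemma rv2E (w : 'rV[R]_2) : w = w 0 0 *: e2 0 + w 0 1 *: e2 1.
Proof.
apply/rowP => j; rewrite !mxE /=.
case: j => [[|[|j]]] Hj //=; rewrite ?mulr1 ?mulr0 ?addr0 ?add0r //.
  by congr (w 0 _); apply: val_inj.
  by congr (w 0 _); apply: val_inj.
Qed.

Lemma diff_rv2 {W : normedModType R} (g : 'rV[R]_2 -> W) y w :
  differentiable g y -> 'd g y w = w 0 0 *: pd 0 g y + w 0 1 *: pd 1 g y.
Proof.
by move=> dg; rewrite /pd !deriveE // {1}(rv2E w) linearD !linearZ.
Qed.

Lemma smooth_pd {W : normedModType R} (W0 : set 'rV[R]_2) (g : 'rV[R]_2 -> W) i :
  smooth_on W0 g -> smooth_on W0 (pd i g).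
Proof. by move=> sg k; exact: Ck_der (sg k.+1). Qed.

Lemma Ck_comp {V : normedModType R} k {W : normedModType R} (U : set V) (W0 : set 'rV[R]_2)
  (c : V -> 'rV[R]_2) (g : 'rV[R]_2 -> W) :
  open U -> open W0 -> (forall x, U x -> W0 (c x)) ->
  Ck k U c -> smooth_on W0 g -> Ck k U (g \o c).
Proof.
move=> oU oW cUW; elim: k g => [|k IH] g.
  move=> cc sg x Ux.
  exact: (continuous_comp (cc x Ux) (Ck_cont (sg 0%N) (cUW x Ux))).
move=> Cc sg; have Cc' := Ck_pred Cc; case: Cc => dc hc; split.
  move=> x Ux; have h1 := dc x Ux; have h2 := Ck_diff (sg 1%N) (cUW x Ux).
  exact: (@differentiable_comp R V _ W c g x h1 h2).
move=> v.
apply: (Ck_ext oU _ (Ck_add oU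
   (Ck_scale oU (Ck_coord 0 0 oU (hc v)) (IH _ Cc' (smooth_pd 0 sg)))
   (Ck_scale oU (Ck_coord 0 1 oU (hc v)) (IH _ Cc' (smooth_pd 1 sg))))) => x Ux /=.
have dgc : differentiable g (c x) := Ck_diff (sg 1%N) (cUW x Ux).
have dgcx : differentiable (g \o c) x := @differentiable_comp R V _ W c g x (dc x Ux) dgc.
rewrite (deriveE _ dgcx) (diff_comp (dc x Ux) dgc) /= diff_rv2 //.
by rewrite -(deriveE _ (dc x Ux)).
Qed.


Lemma vfderE {W : normedModType R} (X : 'rV[R]_2 -> 'rV[R]_2) (g : 'rV[R]_2 -> W) x :
  differentiable g x ->
  vfder X g x = X x 0 0 *: pd 0 g x + X x 0 1 *: pd 1 g x.
Proof. by move=> dg; rewrite /vfder deriveE // diff_rv2. Qed.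

Lemma smooth_vfder {W : normedModType R} (W0 : set 'rV[R]_2)
  (X : 'rV[R]_2 -> 'rV[R]_2) (g : 'rV[R]_2 -> W) :
  open W0 -> smooth_on W0 X -> smooth_on W0 g -> smooth_on W0 (vfder X g).
Proof.
move=> oW sX sg k.
apply: (Ck_ext oW _ (Ck_add oW
   (Ck_scale oW (Ck_coord 0 0 oW (sX k)) (smooth_pd 0 sg k))
   (Ck_scale oW (Ck_coord 0 1 oW (sX k)) (smooth_pd 1 sg k)))) => x Wx /=.
by rewrite vfderE //; apply: (Ck_diff (sg 1%N)).
Qed.

Lemma smooth_vfiter {W : normedModType R} (W0 : set 'rV[R]_2)
  (X : 'rV[R]_2 -> 'rV[R]_2) (g : 'rV[R]_2 -> W) n :
  open W0 -> smooth_on W0 X -> smooth_on W0 g -> smooth_on W0 (vfiter n X g).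
Proof.
move=> oW sX sg; elim: n => [|n IH] //=.
exact: smooth_vfder.
Qed.

Section Curves.
Context {W : normedModType R}.
Implicit Types (h a b : R -> W) (I : set R).

Lemma derive1_fun h : (derive1 h) = (fun t => derive h t 1).
Proof. by apply/funext => t; rewrite derive1E. Qed.

Lemma smooth_derive1 I h : smooth_on I h -> smooth_on I (derive1 h).
Proof. by move=> sh k; rewrite derive1_fun; exact: Ck_der (sh k.+1). Qed.

Lemma smooth_derive1n I h j : smooth_on I h -> smooth_on I (derive1n j h).
Proof. by move=> sh; elim: j => [|j IH] //; rewrite derive1nS; exact: smooth_derive1. Qed.

Lemma smooth_derivable I h t : smooth_on I h -> I t -> derivable h t 1.
Proof. by move=> sh It; apply: diff_derivable; exact: (Ck_diff (sh 1%N)). Qed.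

Lemma derive1n_ext I h1 h2 : open I -> (forall t, I t -> h1 t = h2 t) ->
  forall j t, I t -> (derive1n j h1) t = (derive1n j h2) t.
Proof.
move=> oI e; elim=> [|j IH] t It; first exact: e.
rewrite !derive1nS !derive1E; apply: near_eq_derive.
by near=> s; apply: IH; near: s; exact: (open_near oI It).
Unshelve. all: by end_near. Qed.

Lemma derive1n_add I a b : open I -> smooth_on I a -> smooth_on I b ->
  forall j t, I t -> (derive1n j (fun s => a s + b s)) t = (derive1n j a) t + (derive1n j b) t.
Proof.
move=> oI sa sb; elim=> [|j IH] t It //.
rewrite !derive1nS !derive1E.
rewrite (@near_eq_derive _ _ _ _ (fun s => (derive1n j a) s + (derive1n j b) s)); last first.
  by near=> s; apply: IH; near: s; exact: (open_near oI It).
rewrite (deriveD (f := (derive1n j a)) (g := (derive1n j b))) //;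
  apply: smooth_derivable It; exact: smooth_derive1n.
Unshelve. all: by end_near. Qed.

Lemma derive1n_sub I a b : open I -> smooth_on I a -> smooth_on I b ->
  forall j t, I t -> (derive1n j (fun s => a s - b s)) t = (derive1n j a) t - (derive1n j b) t.
Proof.
move=> oI sa sb; elim=> [|j IH] t It //.
rewrite !derive1nS !derive1E.
rewrite (@near_eq_derive _ _ _ _ (fun s => (derive1n j a) s - (derive1n j b) s)); last first.
  by near=> s; apply: IH; near: s; exact: (open_near oI It).
rewrite (deriveB (f := (derive1n j a)) (g := (derive1n j b))) //;
  apply: smooth_derivable It; exact: smooth_derive1n.
Unshelve. all: by end_near. Qed.

Definition Z m h := forall j, (j < m)%N -> (derive1n j h) 0 = 0.

Lemma Z_S m h : Z m.+1 h <-> h 0 = 0 /\ Z m (derive1 h).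
Proof.
split.
  by move=> z; split; [exact: (z 0%N) | move=> j jm; rewrite -derive1Sn; apply: z].
move=> [h0 z] [|j] jm //; rewrite derive1Sn; exact: z.
Qed.

Lemma Z_pred m h : Z m.+1 h -> Z m h.
Proof. by move=> z j jm; apply: z; rewrite ltnS ltnW. Qed.

Lemma Z_ext I m h1 h2 : open I -> I 0 -> (forall t, I t -> h1 t = h2 t) ->
  Z m h1 -> Z m h2.
Proof. by move=> oI I0 e z j jm; rewrite -(derive1n_ext oI e) //; exact: z. Qed.

Lemma Z_add I m a b : open I -> I 0 -> smooth_on I a -> smooth_on I b ->
  Z m a -> Z m b -> Z m (fun t => a t + b t).
Proof.
by move=> oI I0 sa sb za zb j jm; rewrite (derive1n_add oI sa sb) // za // zb // addr0.
Qed.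

Lemma Z_sub I m a b : open I -> I 0 -> smooth_on I a -> smooth_on I b ->
  Z m a -> Z m b -> Z m (fun t => a t - b t).
Proof.
by move=> oI I0 sa sb za zb j jm; rewrite (derive1n_sub oI sa sb) // za // zb // subr0.
Qed.

End Curves.

Lemma derive1_scalef {W : normedModType R} (I : set R) (phi : R -> R) (F : R -> W) t : smooth_on I phi -> smooth_on I F -> I t ->
  derive1 (fun s => phi s *: F s) t = derive1 phi t *: F t + phi t *: derive1 F t.
Proof.
move=> sp sF It; rewrite !derive1E derive_scalef //.
  exact: (Ck_diff (sp 1%N)).
exact: (Ck_diff (sF 1%N)).
Qed.

Lemma Z_scale {W : normedModType R} (I : set R) m (phi : R -> R) (F : R -> W) : open I -> I 0 -> smooth_on I phi -> smooth_on I F ->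
  Z m phi \/ Z m F -> Z m (fun t => phi t *: F t).
Proof.
move=> oI I0; elim: m phi F => [|m IH] phi F sp sF z; first by move=> j.
apply/Z_S; split.
  by case: z => /Z_S [-> _]; rewrite ?scale0r ?scaler0.
apply: (Z_ext (I := I) (h1 := fun t => derive1 phi t *: F t + phi t *: derive1 F t)) => //.
  by move=> t It; symmetry; apply: (derive1_scalef sp sF It).
apply: (Z_add (I := I)) => //.
- by move=> k; exact: (Ck_scale oI (smooth_derive1 sp k) (sF k)).
- by move=> k; exact: (Ck_scale oI (sp k) (smooth_derive1 sF k)).
- destruct z as [z|z]; have [_ z'] := proj1 (Z_S _ _) z.
    exact: (IH _ _ (smooth_derive1 sp) sF (or_introl z')).
  exact: (IH _ _ (smooth_derive1 sp) sF (or_intror (Z_pred z))).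
- destruct z as [z|z]; have [_ z'] := proj1 (Z_S _ _) z.
    exact: (IH _ _ sp (smooth_derive1 sF) (or_introl (Z_pred z))).
  exact: (IH _ _ sp (smooth_derive1 sF) (or_intror z')).
Qed.


Lemma derive1n_coord (I : set R) n (h : R -> 'rV[R]_n) i : open I -> smooth_on I h ->
  forall j t, I t -> derive1n j (fun s => h s 0 i) t = derive1n j h t 0 i.
Proof.
move=> oI sh; elim=> [|j IH] t It //.
rewrite !derive1nS !derive1E.
rewrite (@near_eq_derive _ _ _ _ (fun s => derive1n j h s 0 i)); last first.
  by near=> s; apply: IH; near: s; exact: (open_near oI It).
rewrite derive_mx ?mxE //.
by apply: smooth_derivable It; exact: smooth_derive1n.
Unshelve. all: by end_near. Qed.

Lemma Z_coord (I : set R) m n (h : R -> 'rV[R]_n) i : open I -> I 0 -> smooth_on I h ->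
  Z m h -> Z m (fun t => h t 0 i).
Proof.
by move=> oI I0 sh z j jm; rewrite (derive1n_coord i oI sh) // z // mxE.
Qed.

Lemma smooth_coord (I : set R) n (h : R -> 'rV[R]_n) i : open I -> smooth_on I h ->
  smooth_on I (fun t => h t 0 i).
Proof. by move=> oI sh k; exact: Ck_coord. Qed.

Lemma derive1_comp_rv2 {W : normedModType R} (g : 'rV[R]_2 -> W) (c : R -> 'rV[R]_2) t :
  differentiable c t -> differentiable g (c t) ->
  derive1 (g \o c) t = 'd g (c t) (derive1 c t).
Proof.
move=> dc dg.
have dgc : differentiable (g \o c) t := @differentiable_comp R R _ W c g t dc dg.
by rewrite !derive1E (deriveE _ dgc) (diff_comp dc dg) /= (deriveE _ dc).
Qed.

Lemma derive1_comp_pd {W : normedModType R} (g : 'rV[R]_2 -> W) (c : R -> 'rV[R]_2) t :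
  differentiable c t -> differentiable g (c t) ->
  derive1 (g \o c) t = derive1 c t 0 0 *: pd 0 g (c t) + derive1 c t 0 1 *: pd 1 g (c t).
Proof. by move=> dc dg; rewrite derive1_comp_rv2 // diff_rv2. Qed.

End CkS2.

Section Main.
Context {R : realType}.

Lemma ML (W0 : set 'rV[R]_2) (X : 'rV[R]_2 -> 'rV[R]_2) (I : set R)
  (c : R -> 'rV[R]_2) m :
  open W0 -> open I -> I 0 -> smooth_on W0 X -> smooth_on I c ->
  (forall t, I t -> W0 (c t)) ->
  Z m (fun t => derive1 c t - X (c t)) ->
  forall k, (k <= m)%N -> forall (W : normedModType R) (g : 'rV[R]_2 -> W),
  smooth_on W0 g -> derive1n k (g \o c) 0 = vfiter k X g (c 0).
Proof.
move=> oW oI I0 sX sc cIW z; elim=> [|k IH] km W g sg //.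
set r := fun t => derive1 c t - X (c t).
have sXc : smooth_on I (X \o c) by move=> j; exact: (Ck_comp oI oW cIW (sc j) sX).
have sr : smooth_on I r by move=> j; exact: (Ck_minus oI (smooth_derive1 sc j) (sXc j)).
have spg i : smooth_on I (pd i g \o c).
  by move=> j; exact: (Ck_comp oI oW cIW (sc j) (smooth_pd i sg)).
have key : forall t, I t -> derive1 (g \o c) t =
    vfder X g (c t) + (r t 0 0 *: pd 0 g (c t) + r t 0 1 *: pd 1 g (c t)).
  move=> t It.
  have dc : differentiable c t := Ck_diff (sc 1%N) It.
  have dg : differentiable g (c t) := Ck_diff (sg 1%N) (cIW t It).
  rewrite derive1_comp_rv2 //.
  have -> : derive1 c t = X (c t) + r t by rewrite /r addrC subrK.
  by rewrite linearD -diff_rv2 // /vfder deriveE.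
have s1 : smooth_on I (vfder X g \o c).
  by move=> j; exact: (Ck_comp oI oW cIW (sc j) (smooth_vfder oW sX sg)).
have s2 : smooth_on I (fun t => r t 0 0 *: pd 0 g (c t) + r t 0 1 *: pd 1 g (c t)).
  move=> j; apply: Ck_add => //; apply: Ck_scale => //;
    solve [exact: (smooth_coord _ oI sr j) | exact: (spg _ j)].
rewrite derive1Sn (derive1n_ext oI key k I0) (derive1n_add oI s1 s2 k I0).
have zz : Z m (fun t => r t 0 0 *: pd 0 g (c t) + r t 0 1 *: pd 1 g (c t)).
  apply: (Z_add (I := I)) => //.
  - by move=> j; apply: Ck_scale => //; solve [exact: (smooth_coord _ oI sr j) | exact: (spg _ j)].
  - by move=> j; apply: Ck_scale => //; solve [exact: (smooth_coord _ oI sr j) | exact: (spg _ j)].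
  - exact: (Z_scale oI I0 (smooth_coord 0 oI sr) (spg 0) (or_introl (Z_coord 0 oI I0 sr z))).
  - exact: (Z_scale oI I0 (smooth_coord 1 oI sr) (spg 1) (or_introl (Z_coord 1 oI I0 sr z))).
rewrite (zz k km).
rewrite addr0 /vfiter iterSr.
exact: (IH (ltnW km) _ (vfder X g) (smooth_vfder oW sX sg)).
Qed.


Lemma JL (W0 : set 'rV[R]_2) (I : set R) (c1 c2 : R -> 'rV[R]_2) n :
  open W0 -> open I -> I 0 -> smooth_on I c1 -> smooth_on I c2 ->
  (forall t, I t -> W0 (c1 t)) -> (forall t, I t -> W0 (c2 t)) ->
  Z n (fun t => c2 t - c1 t) ->
  forall (W : normedModType R) (g : 'rV[R]_2 -> W), smooth_on W0 g ->
  Z n (fun t => g (c2 t) - g (c1 t)).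
Proof.
move=> oW oI I0 s1 s2 cW1 cW2; elim: n => [|n IH] z W g sg; first by move=> j.
have [z0 z'] := proj1 (Z_S _ _) z.
apply/Z_S; split.
  by move: z0 => /= /subr0_eq ->; rewrite subrr.
have sd : smooth_on I (fun t => c2 t - c1 t) := fun j => Ck_minus oI (s2 j) (s1 j).
have sdd := smooth_derive1 sd.
have sc1 := smooth_derive1 s1.
have sg1 i : smooth_on I (pd i g \o c1).
  by move=> j; exact: (Ck_comp oI oW cW1 (s1 j) (smooth_pd i sg)).
have sg2 i : smooth_on I (pd i g \o c2).
  by move=> j; exact: (Ck_comp oI oW cW2 (s2 j) (smooth_pd i sg)).
have sA i : smooth_on I (fun t => derive1 (fun s => c2 s - c1 s) t 0 i *: pd i g (c2 t)).
  by move=> j; exact: (Ck_scale oI (smooth_coord i oI sdd j) (sg2 i j)).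
have sB i : smooth_on I (fun t => derive1 c1 t 0 i *: (pd i g (c2 t) - pd i g (c1 t))).
  by move=> j; exact: (Ck_scale oI (smooth_coord i oI sc1 j) (Ck_minus oI (sg2 i j) (sg1 i j))).
have sAB i : smooth_on I (fun t => derive1 (fun s => c2 s - c1 s) t 0 i *: pd i g (c2 t)
    + derive1 c1 t 0 i *: (pd i g (c2 t) - pd i g (c1 t))).
  by move=> j; exact: (Ck_add oI (sA i j) (sB i j)).
have zA i : Z n (fun t => derive1 (fun s => c2 s - c1 s) t 0 i *: pd i g (c2 t)).
  exact: (Z_scale oI I0 (smooth_coord i oI sdd) (sg2 i) (or_introl (Z_coord i oI I0 sdd z'))).
have zB i : Z n (fun t => derive1 c1 t 0 i *: (pd i g (c2 t) - pd i g (c1 t))).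
  apply: (Z_scale oI I0 (smooth_coord i oI sc1) _ (or_intror _)).
    by move=> j; exact: (Ck_minus oI (sg2 i j) (sg1 i j)).
  exact: (IH (Z_pred z) W (pd i g) (smooth_pd i sg)).
have key : forall t, I t ->
   ((derive1 (fun s => c2 s - c1 s) t 0 0 *: pd 0 g (c2 t)
    + derive1 c1 t 0 0 *: (pd 0 g (c2 t) - pd 0 g (c1 t)))
   + (derive1 (fun s => c2 s - c1 s) t 0 1 *: pd 1 g (c2 t)
    + derive1 c1 t 0 1 *: (pd 1 g (c2 t) - pd 1 g (c1 t))))
   = derive1 (fun t => g (c2 t) - g (c1 t)) t.
  move=> t It.
  have dc1 : differentiable c1 t := Ck_diff (s1 1%N) It.
  have dc2 : differentiable c2 t := Ck_diff (s2 1%N) It.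
  have dg1 : differentiable g (c1 t) := Ck_diff (sg 1%N) (cW1 t It).
  have dg2 : differentiable g (c2 t) := Ck_diff (sg 1%N) (cW2 t It).
  have e1 : derive1 (fun s => c2 s - c1 s) t = derive1 c2 t - derive1 c1 t.
    by rewrite !derive1E (deriveB (f := c2) (g := c1)) //; apply: diff_derivable.
  have e2 : derive1 (fun s => g (c2 s) - g (c1 s)) t
      = derive1 (g \o c2) t - derive1 (g \o c1) t.
    rewrite !derive1E (deriveB (f := g \o c2) (g := g \o c1)) //; apply: diff_derivable.
      exact: (@differentiable_comp R R _ W c2 g t dc2 dg2).
    exact: (@differentiable_comp R R _ W c1 g t dc1 dg1).
  have e3 i : (derive1 c2 t - derive1 c1 t) 0 i = derive1 c2 t 0 i - derive1 c1 t 0 i.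
    by rewrite !mxE.
  rewrite e2 (derive1_comp_pd dc2 dg2) (derive1_comp_pd dc1 dg1) e1 !e3.
  have h (u v : W) (a b : R) : (a - b) *: u + b *: (u - v) = a *: u - b *: v.
    by rewrite scalerBl scalerBr addrA subrK.
  by rewrite !h opprD addrACA.
apply: (Z_ext (I := I) _ _ key) => //.
exact: (Z_add oI I0 (sAB 0) (sAB 1) (Z_add oI I0 (sA 0) (sB 0) (zA 0) (zB 0))
                                    (Z_add oI I0 (sA 1) (sB 1) (zA 1) (zB 1))).
Qed.


End Main.

Section Poly.
Context {R : realType}.

Lemma Ck_id k (U : set R) : Ck k U (fun t : R => t).
Proof.
case: k => [|k] /=; first by move=> x _; exact: cvg_id.
split; first by move=> x _; apply/derivable1_diffP; exact: derivable_id.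
move=> v; rewrite (_ : (fun x => derive (fun t : R => t) x v) = fun=> v).
  exact: Ck_cst.
by apply/funext => x; exact: derive_id.
Qed.

Lemma Ck_mono k m : Ck k setT (fun t : R => t ^+ m).
Proof.
elim: m => [|m IH].
  by apply: (Ck_ext openT _ (Ck_cst k setT (1 : R))) => x _; rewrite expr0.
apply: (Ck_ext openT _ (Ck_scale openT (Ck_id k setT) IH)) => x _ /=.
by rewrite exprS.
Qed.

Definition phi (m : nat) (t : R) : R := (m`!%:R)^-1 * t ^+ m.
Definition P (m : nat) (d : 'rV[R]_2) (t : R) : 'rV[R]_2 := phi m t *: d.

Lemma smooth_phi m : smooth_on setT (phi m).
Proof.
move=> k; have := Ck_scale openT (Ck_cst k setT ((m`!%:R)^-1 : R)) (Ck_mono k m).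
apply: Ck_ext => //; exact: openT.
Qed.

Lemma smooth_P m d : smooth_on setT (P m d).
Proof. by move=> k; exact: (Ck_scale openT (smooth_phi m k) (Ck_cst k setT d)). Qed.

Lemma derive1_phi m t : derive1 (phi m.+1) t = phi m t.
Proof.
rewrite /phi derive1Ml; last exact: exprn_derivable.
rewrite exp_derive1 /= factS natrM.
have h1 : (m.+1%:R : R) != 0 by rewrite pnatr_eq0.
have h2 : (m`!%:R : R) != 0 by rewrite pnatr_eq0 -lt0n fact_gt0.
rewrite [_ *: _]/(GRing.scale _ _) /=.
by rewrite invfM mulrACA mulVf // mul1r.
Qed.

Lemma derive1_P m d : derive1 (P m.+1 d) = P m d.
Proof.
apply/funext => t; rewrite /P !derive1E derive_scalef.
- by rewrite derive_cst scaler0 addr0; rewrite -derive1E derive1_phi.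
- exact: (Ck_diff (smooth_phi m.+1 1%N)).
- exact: differentiable_cst.
Qed.

Lemma derive1n_P m d j : (j <= m)%N -> derive1n j (P m d) = P (m - j) d.
Proof.
elim: j => [|j IH] jm; first by rewrite subn0.
rewrite derive1nS IH; last by apply: ltnW.
have e : (m - j = (m - j.+1).+1)%N by rewrite subnSK.
rewrite e; exact: derive1_P.
Qed.

Lemma P0 m d : P m d 0 = if m is 0 then d else 0.
Proof.
rewrite /P /phi; case: m => [|m]; first by rewrite expr0 mulr1 fact0 invr1 scale1r.
by rewrite expr0n mulr0 scale0r.
Qed.

Lemma Z_P m d : Z m (P m d).
Proof.
move=> j jm; rewrite derive1n_P; last by apply: ltnW.
rewrite P0; have : (0 < m - j)%N by rewrite subn_gt0.
by case: (m - j)%N.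
Qed.

Lemma derive1n_P_top m d : derive1n m (P m d) 0 = d.
Proof. by rewrite derive1n_P // subnn P0. Qed.

End Poly.

Section Construct.
Context {R : realType}.

Lemma grp_id {V : zmodType} (a b x y : V) : a - b - y = a - x - b + (x - y).
Proof. by rewrite [RHS]addrA [_ - b + x]addrAC subrK. Qed.

Lemma construct (W0 : set 'rV[R]_2) (X : 'rV[R]_2 -> 'rV[R]_2) p :
  open W0 -> W0 p -> smooth_on W0 X ->
  forall m, exists c : R -> 'rV[R]_2,
    [/\ smooth_on setT c, c 0 = p & Z m.+1 (fun t => derive1 c t - X (c t))].
Proof.
move=> oW Wp sX; elim=> [|m [c [sc c0 z]]].
  exists (fun t => p + P 1 (X p) t); split.
  - by move=> k; exact: (Ck_add openT (Ck_cst k setT p) (smooth_P 1 (X p) k)).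
  - by rewrite P0 addr0.
  - move=> [|j] // _ /=.
    have := derive1n_add openT (fun k => Ck_cst k setT p) (smooth_P 1 (X p)) 1 (Logic.I : setT 0).
    rewrite /= => ->; rewrite derive1_cst derive1_P !P0 /= add0r addr0.
    by rewrite subrr.
set r := fun t => derive1 c t - X (c t).
set d := derive1n m.+1 r 0.
set c2 := fun t => c t - P m.+2 d t.
have sP := smooth_P m.+2 d.
have sc2 : smooth_on setT c2 by move=> k; exact: (Ck_minus openT (sc k) (sP k)).
have cc : {in c @^-1` W0, continuous c} by move=> x _; exact: (Ck_cont (sc 0%N)).
have cc2 : {in c2 @^-1` W0, continuous c2} by move=> x _; exact: (Ck_cont (sc2 0%N)).
pose I := c @^-1` W0 `&` c2 @^-1` W0.
have oI : open I by apply: openI; apply: open_comp.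
have c20 : c2 0 = p by rewrite /c2 c0 P0 subr0.
have I0 : I 0 by split; rewrite /= ?c0 ?c20.
have cI : forall t, I t -> W0 (c t) by move=> t [].
have c2I : forall t, I t -> W0 (c2 t) by move=> t [].
have scI : smooth_on I c by move=> k; apply: Ck_sub (sc k).
have sc2I : smooth_on I c2 by move=> k; apply: Ck_sub (sc2 k).
have sPI : smooth_on I (P m.+2 d) by move=> k; apply: Ck_sub (sP k).
have sP1I : smooth_on I (P m.+1 d) by move=> k; apply: Ck_sub (smooth_P m.+1 d k).
have sXc : smooth_on I (X \o c) by move=> j; exact: (Ck_comp oI oW cI (scI j) sX).
have sXc2 : smooth_on I (X \o c2) by move=> j; exact: (Ck_comp oI oW c2I (sc2I j) sX).
have sr : smooth_on I r by move=> j; exact: (Ck_minus oI (smooth_derive1 scI j) (sXc j)).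
have dc2 t : derive1 c2 t = derive1 c t - P m.+1 d t.
  have := derive1n_sub openT sc sP 1 (Logic.I : setT t).
  by rewrite /= derive1_P.
exists c2; split => //.
apply: (Z_ext (I := I) (h1 := fun t => (r t - P m.+1 d t) - (X (c2 t) - X (c t)))) => //.
  by move=> t _; rewrite dc2 /r opprB -grp_id.
apply: (Z_sub oI I0).
- by move=> k; exact: (Ck_minus oI (sr k) (sP1I k)).
- by move=> k; exact: (Ck_minus oI (sXc2 k) (sXc k)).
- move=> j jm; rewrite (derive1n_sub oI sr sP1I) //.
  case: (ltnP j m.+1) => jm'.
    by rewrite z // Z_P // subr0.
  have -> : j = m.+1 by apply/anti_leq/andP; split.
  by rewrite derive1n_P_top subrr.
- apply: (JL oW oI I0 scI sc2I cI c2I) => //.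
  have e : (fun t => c2 t - c t) = (fun t => (-1 : R) *: P m.+2 d t).
    by apply/funext => t; rewrite /c2 addrAC subrr add0r scaleN1r.
  rewrite e; apply: (Z_scale openT (Logic.I : setT 0)) => //.
    by move=> k; exact: Ck_cst.
  by right; exact: Z_P.
Qed.

End Construct.

Lemma det3Z {R : realType} (a b e : 'rV[R]_3) k : det3 a b (k *: e) = k * det3 a b e.
Proof.
rewrite /det3 (expand_det_row _ 2) [in RHS](expand_det_row _ 2) mulr_sumr.
apply: eq_bigr => j _; rewrite !mxE /= -mulrA; congr (_ * (_ * _)).
rewrite /cofactor; congr (_ * _); congr (\det _); apply/matrixP => i i'; rewrite !mxE.
by case: i => [[|[|i]]] Hi.
Qed.

Lemma det2_0 {R : realType} (a : 'rV[R]_2) : det2 a 0 = 0.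
Proof.
rewrite /det2 (expand_det_row _ 1) big1 // => j _.
by rewrite !mxE /= mul0r.
Qed.

Unset Implicit Arguments.
Set Strict Implicit.

Theorem lemma3p5 (R : realType) (U : set 'rV[R]_2) (f n : 'rV[R]_2 -> 'rV[R]_3)
  (p : 'rV[R]_2) (delta : R) (gamma : R -> 'rV[R]_2)
  (W : set 'rV[R]_2) (xi eta : 'rV[R]_2 -> 'rV[R]_2) :
  open U -> U p ->
  frontal_with U f n ->
  nondegenerate_singular_point f n p ->
  (* singular curve through p *)
  regular_curve delta U gamma -> gamma 0 = p ->
  (forall t, sym_int delta t -> singular_point f (gamma t)) ->
  (* smooth vector fields near p *)
  open W -> W p -> W `<=` U -> smooth_on W xi -> smooth_on W eta ->
  (forall t, sym_int delta t -> W (gamma t)) ->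
  (* conditions along gamma *)
  (forall t, sym_int delta t -> xi (gamma t) = derive1 gamma t) ->
  (forall t, sym_int delta t -> derive f (gamma t) (eta (gamma t)) = 0) ->
  (forall t, sym_int delta t -> 0 < det2 (xi (gamma t)) (eta (gamma t))) ->
  (* (a) *) vfiter 3 eta f p = 0 ->
  (* (b) *) lin_indep2 (vfder xi f p) (vfiter 2 eta f p) ->
  (* (c) *) ~ lin_indep2 (vfder xi (vfiter 3 eta f) p) (vfiter 2 eta f p) ->
  exists (eps : R) (c : R -> 'rV[R]_2) (l : R),
    [/\ regular_curve eps U c, c 0 = p,
        (exists k : R, derive1 c 0 = k *: eta p),
        derive1n 2 (f \o c) 0 <> 0 /\
        derive1n 3 (f \o c) 0 = l *: derive1n 2 (f \o c) 0 &
        det3 (derive f p (derive1 gamma 0)) (derive1n 2 (f \o c) 0)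
             (3 *: derive1n 5 (f \o c) 0 - (10 * l) *: derive1n 4 (f \o c) 0)
        = 3 * det3 (vfder xi f p) (vfiter 2 eta f p) (vfiter 5 eta f p)].
Proof.
move=> oU Up [sf _ _ _] _ [dpos _ _ _] g0 _ oW Wp WU _ seta _ xig _ detpos ha hb _.
have sfW : smooth_on W f by move=> k; exact: (Ck_sub WU (sf k)).
have [c [sc c0 z]] := construct oW Wp seta 4.
pose I := c @^-1` W.
have oI : open I by apply: open_comp => // x _; exact: (Ck_cont (sc 0%N)).
have I0 : I 0 by rewrite /I /= c0.
have scI : smooth_on I c by move=> k; apply: Ck_sub (sc k).
have ML5 k : (k <= 4)%N -> derive1n k.+1 (f \o c) 0 = vfiter k.+1 eta f p.
  move=> km; rewrite -c0; have km2 : (k.+1 <= 5)%N := km.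
  exact: (ML oW oI I0 seta scI (fun t It => It) z km2 sfW).
have dc0 : derive1 c 0 = eta p.
  by have := z 0%N isT; rewrite /= c0 => /subr0_eq.
have d0 : sym_int delta 0 by rewrite /sym_int /= oppr_lt0 dpos.
have etap : eta p != 0.
  by apply/eqP => e0; have := detpos 0 d0; rewrite g0 e0 det2_0 ltxx.
have near1 : \forall t \near 0, W (c t) /\ derive1 c t != 0.
  have cd : {for 0, continuous (derive1 c)} := Ck_cont (smooth_derive1 sc 0%N) (Logic.I : setT 0).
  have ep : 0 < `|eta p| by rewrite normr_gt0.
  move/cvgr_dist_lt: cd => /(_ `|eta p| ep) H.
  near=> t; split; first by near: t; exact: (open_near oI I0).
  have Ht : `|derive1 c 0 - derive1 c t| < `|eta p| by near: t; exact: H.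
  by apply/eqP => ht; move: Ht; rewrite ht subr0 dc0 ltxx.
have [e e0 he] : exists2 e : R, 0 < e &
    forall t, sym_int e t -> W (c t) /\ derive1 c t != 0.
  move/nbhs_ballP: near1 => [e e0 he]; exists e => // t ht; apply: he.
  by rewrite -ball_normE /= sub0r normrN ltr_norml.
exists e, c, 0; split.
- split => //.
  + by move=> k; apply: Ck_sub (sc k).
  + by move=> t /he [/WU].
  + by move=> t /he [_ /eqP].
- exact: c0.
- by exists 1; rewrite scale1r.
- rewrite (ML5 1%N) // (ML5 2%N) // ha scale0r; split => //.
  move=> h2; have := hb 0 1; rewrite h2 scale0r scaler0 addr0 => /(_ erefl) [_] /eqP.
  by rewrite oner_eq0.
- rewrite (ML5 1%N) // (ML5 3%N) // (ML5 4%N) // mulr0 scale0r subr0 det3Z.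
  by rewrite -(xig 0 d0) g0.
Unshelve. all: by end_near.
Qed.
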